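(* For a positive integer $k$, define $f_k$ on the two-dimensional probability simplex by $f_k(x_1,x_2)=1-(2x_1-1)^{2k}$ (equivalently $1-(x_1-x_2)^{2k}$). Then $f_k\in\mathfrak{F}_{sc}$. Moreover, let $\rho=\frac12(I+\vec n\cdot\vec\sigma)$ be a qubit state with Bloch vector $\vec n=n(\sin\theta\cos\phi,\sin\theta\sin\phi,\cos\theta)$ with $0<n<1$, $0<\theta\le\pi/2$, and let $\mathfrak{D}^{(m_1)}$ and $\mathfrak{D}^{(m_2)}$ be the following pure state decompositions of $\rho$: with $\theta_3=\arccos\sqrt{1-n^2\sin^2\theta}$, $\mathfrak{D}^{(m_1)}$ consists of $\cos\frac{\theta_3}{2}|0\rangle+e^{i\phi}\sin\frac{\theta_3}{2}|1\rangle$ and $\sin\frac{\theta_3}{2}|0\rangle+e^{i\phi}\cos\frac{\theta_3}{2}|1\rangle$ with probabilities $\frac12\big(1\pm\frac{n\cos\theta}{\cos\theta_3}\big)$; with $\theta_4=\arccos\frac{1+2n\cos\theta+n^2\cos2\theta}{1+n^2+2n\cos\theta}$, $\mathfrak{D}^{(m_2)}$ consists of $|1\rangle$ with probability $\frac{1-n^2}{2(1+n\cos\theta)}$ and $\cos\frac{\theta_4}{2}|0\rangle+e^{i\phi}\sin\frac{\theta_4}{2}|1\rangle$ with probability $\frac{1+n^2+2n\cos\theta}{2(1+n\cos\theta)}$. Then there exists $K$ such that for all $k\ge K$, $\bar C_{f_k}(\mathfrak{D}^{(m_1)})>\bar C_{f_k}(\mathfrak{D}^{(m_2)})$. In particular,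 there is no single pure state decomposition of such a $\rho$ that minimizes the average coherence $\bar C_f$ simultaneously for all $f\in\mathfrak{F}_{sc}$ among the decompositions $\mathfrak{D}^{(m_1)},\mathfrak{D}^{(m_2)}$ (i.e. $\mathfrak{D}^{(m_1)}$ is not minimal for every $f$).
   Context: Reference basis $\{|0\rangle,|1\rangle\}$ of $\mathbb{C}^2$; $\vec\sigma$ are the Pauli matrices. Let $\Omega$ be the probability simplex in $\mathbb{R}^2$. $\mathfrak{F}_{sc}$ denotes the set of functions $f:\Omega\to\mathbb{R}$ such that (i) $f((1,0))=0$; (ii) $f(x_1,x_2)=f(x_2,x_1)$; (iii) $f$ is concave. For a unit vector $|\psi\rangle=\psi_0|0\rangle+\psi_1|1\rangle$, $C_f(|\psi\rangle)=f(|\psi_0|^2,|\psi_1|^2)$. A pure state decomposition of $\rho$ is a finite family $\{p_k,|\psi_k\rangle\}$ with $p_k\ge0$, $\sum_kp_k=1$, unit vectors $|\psi_k\rangle$ and $\rho=\sum_kp_k|\psi_k\rangle\langle\psi_k|$; its average coherence is $\bar C_f(\mathfrak{D})=\sum_kp_kC_f(|\psi_k\rangle)$. *)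

(* Defs.v *)
From HB Require Import structures.
From mathcomp Require Import all_boot all_order all_algebra.
From mathcomp Require Import all_classical all_reals.
From mathcomp Require Import trigo.
From mathcomp Require Import complex.
Set Implicit Arguments. Unset Strict Implicit. Unset Printing Implicit Defensive.
Import Order.TTheory GRing.Theory Num.Theory.
Local Open Scope ring_scope.

Section Qubit.
Variable R : realType.

Definition in_simplex (x : R * R) : Prop := 0 <= x.1 /\ 0 <= x.2 /\ x.1 + x.2 = 1.

(* the class F_sc of functions Omega -> R (represented as R*R -> R, only
   values on Omega matter) *)
Definition in_Fsc (f : R * R -> R) : Prop :=
  [/\ f (1, 0) = 0,
      (forall x, in_simplex x -> f (x.2, x.1) = f x) &
      (forall x y (t : R), in_simplex x -> in_simplex y -> 0 <= t <= 1 ->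
          t * f x + (1 - t) * f y <= f (t * x.1 + (1 - t) * y.1, t * x.2 + (1 - t) * y.2))].

Definition fk (k : nat) (x : R * R) : R := 1 - (2 * x.1 - 1) ^+ (2 * k).

Definition sqnorm (z : R[i]) : R := complex.Re z ^+ 2 + complex.Im z ^+ 2.

Definition ket (a b : R[i]) : 'cV[R[i]]_2 := \col_(j < 2) if j == 0 then a else b.
Definition comp0 (psi : 'cV[R[i]]_2) : R[i] := psi 0 0.
Definition comp1 (psi : 'cV[R[i]]_2) : R[i] := psi 1 0.

Definition is_unit_vector (psi : 'cV[R[i]]_2) : Prop :=
  sqnorm (comp0 psi) + sqnorm (comp1 psi) = 1.

Definition proj (psi : 'cV[R[i]]_2) : 'M[R[i]]_2 :=
  psi *m (map_mx (@conjc R) psi)^T.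

Definition Cf (f : R * R -> R) (psi : 'cV[R[i]]_2) : R :=
  f (sqnorm (comp0 psi), sqnorm (comp1 psi)).

Definition decomp := seq (R * 'cV[R[i]]_2).

Definition is_pure_decomposition (rho : 'M[R[i]]_2) (D : decomp) : Prop :=
  [/\ (forall d, d \in D -> 0 <= d.1),
      \sum_(d <- D) d.1 = 1,
      (forall d, d \in D -> is_unit_vector d.2) &
      rho = \sum_(d <- D) ((d.1)%:C%C *: proj d.2)].

Definition avgC (f : R * R -> R) (D : decomp) : R := \sum_(d <- D) d.1 * Cf f d.2.

Definition sigma_x : 'M[R[i]]_2 :=
  \matrix_(i < 2, j < 2) if i == j then 0 else 1.
Definition sigma_y : 'M[R[i]]_2 :=
  \matrix_(i < 2, j < 2)
    if i == j then 0 else if (i == 0) then - 'i%C else 'i%C.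
Definition sigma_z : 'M[R[i]]_2 :=
  \matrix_(i < 2, j < 2) if i == j then (if i == 0 then 1 else -1) else 0.

Definition rho_bloch (nx ny nz : R) : 'M[R[i]]_2 :=
  (1 / 2 : R)%:C%C *: (1%:M + (nx%:C%C *: sigma_x + ny%:C%C *: sigma_y + nz%:C%C *: sigma_z)).

Definition rho_state (n th ph : R) : 'M[R[i]]_2 :=
  rho_bloch (n * sin th * cos ph) (n * sin th * sin ph) (n * cos th).

Definition expi (ph : R) : R[i] := (cos ph +i* sin ph)%C.

Definition theta3 (n th : R) : R := acos (Num.sqrt (1 - n ^+ 2 * sin th ^+ 2)).
Definition theta4 (n th : R) : R :=
  acos ((1 + 2 * n * cos th + n ^+ 2 * cos (2 * th)) / (1 + n ^+ 2 + 2 * n * cos th)).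

Definition Dm1 (n th ph : R) : decomp :=
  let t3 := theta3 n th in
  [:: ((1 + n * cos th / cos t3) / 2,
        ket (cos (t3 / 2))%:C%C (expi ph * (sin (t3 / 2))%:C%C));
      ((1 - n * cos th / cos t3) / 2,
        ket (sin (t3 / 2))%:C%C (expi ph * (cos (t3 / 2))%:C%C))].

Definition Dm2 (n th ph : R) : decomp :=
  let t4 := theta4 n th in
  [:: ((1 - n ^+ 2) / (2 * (1 + n * cos th)), ket 0 1);
      ((1 + n ^+ 2 + 2 * n * cos th) / (2 * (1 + n * cos th)),
        ket (cos (t4 / 2))%:C%C (expi ph * (sin (t4 / 2))%:C%C))].

End Qubit.

(* Main.v *)
Require Import Defs.
From HB Require Import structures.
From mathcomp Require Import all_boot all_order all_algebra.
From mathcomp Require Import all_classical all_reals.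
From mathcomp Require Import trigo.
From mathcomp Require Import complex.
From mathcomp Require Import topology normedtype sequences.
From mathcomp Require Import ring lra.
Import Order.TTheory GRing.Theory Num.Theory.
Local Open Scope ring_scope.

Section H.
Variable R : realType.
Implicit Types x y : R[i].

Lemma convex_pow (k : nat) (x y t : R) : 0 <= x -> 0 <= y -> 0 <= t <= 1 ->
  (t * x + (1 - t) * y) ^+ k <= t * x ^+ k + (1 - t) * y ^+ k.
Proof.
move=> x0 y0 /andP[t0 t1]; elim: k => [|k IH]; first by rewrite !expr0; lra.
have m0 : 0 <= t * x + (1 - t) * y by apply: addr_ge0; apply: mulr_ge0 => //; lra.
have cheb : 0 <= (x - y) * (x ^+ k - y ^+ k).
  have [xy|yx] := leP x y.
    apply: mulr_le0 ; first lra.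
    by rewrite subr_le0; apply: lerXn2r.
  apply: mulr_ge0; first lra.
  by rewrite subr_ge0; apply: lerXn2r => //; apply: ltW.
rewrite !exprS.
apply: (le_trans (ler_wpM2l m0 IH)).
have e : t * (x * x ^+ k) + (1 - t) * (y * y ^+ k) -
   (t * x + (1 - t) * y) * (t * x ^+ k + (1 - t) * y ^+ k)
   = t * (1 - t) * ((x - y) * (x ^+ k - y ^+ k)) by ring.
rewrite -subr_ge0 e; apply: mulr_ge0 => //; apply: mulr_ge0; lra.
Qed.

Lemma convex_even (k : nat) (a b t : R) : 0 <= t <= 1 ->
  (t * a + (1 - t) * b) ^+ (2 * k) <= t * a ^+ (2 * k) + (1 - t) * b ^+ (2 * k).
Proof.
move=> ht; rewrite !exprM.
apply: le_trans; last exact: (convex_pow k (a^+2) (b^+2) t (sqr_ge0 a) (sqr_ge0 b) ht).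
apply: lerXn2r; rewrite ?nnegrE ?sqr_ge0 //.
  by case/andP: ht => t0 t1; apply: addr_ge0; apply: mulr_ge0 => //; rewrite ?sqr_ge0 //; lra.
case/andP: ht => t0 t1.
have e : t * a ^+ 2 + (1 - t) * b ^+ 2 - (t * a + (1 - t) * b) ^+ 2 = t * (1 - t) * (a - b) ^+ 2 by ring.
rewrite -subr_ge0 e; apply: mulr_ge0; rewrite ?sqr_ge0 //; apply: mulr_ge0; lra.
Qed.

Lemma fk_Fsc (k : nat) : (0 < k)%N -> in_Fsc (@fk R k).
Proof.
move=> k0; split.
- by rewrite /fk /= mulr1 (_ : 2 - 1 = 1 :> R) ?expr1n ?subrr //; lra.
- case=> x1 x2 [/= h1 [h2 h3]]; rewrite /fk /=.
  have -> : 2 * x2 - 1 = - (2 * x1 - 1) by lra.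
  by rewrite exprM sqrrN -exprM.
- case=> x1 x2 [y1 y2] t _ _ ht; rewrite /fk /=.
  have -> : 2 * (t * x1 + (1 - t) * y1) - 1 = t * (2 * x1 - 1) + (1 - t) * (2 * y1 - 1) by ring.
  have := convex_even k (2 * x1 - 1) (2 * y1 - 1) t ht; lra.
Qed.
Local Notation Re := (@complex.Re R).
Local Notation Im := (@complex.Im R).
Lemma ReM x y : Re (x * y) = Re x * Re y - Im x * Im y. Proof. by case: x; case: y. Qed.
Lemma ImM x y : Im (x * y) = Re x * Im y + Im x * Re y. Proof. by case: x; case: y. Qed.
Lemma ReD x y : Re (x + y) = Re x + Re y. Proof. by case: x; case: y. Qed.
Lemma ImD x y : Im (x + y) = Im x + Im y. Proof. by case: x; case: y. Qed.
Lemma ReN x : Re (- x) = - Re x. Proof. by case: x. Qed.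
Lemma ImN x : Im (- x) = - Im x. Proof. by case: x. Qed.
Lemma Re1 : Re (1 : R[i]) = 1. Proof. by []. Qed.
Lemma Im1 : Im (1 : R[i]) = 0. Proof. by []. Qed.
Lemma Re0 : Re (0 : R[i]) = 0. Proof. by []. Qed.
Lemma Im0 : Im (0 : R[i]) = 0. Proof. by []. Qed.
Lemma ReC (r : R) : Re (r%:C)%C = r. Proof. by []. Qed.
Lemma ImC (r : R) : Im (r%:C)%C = 0. Proof. by []. Qed.
Lemma ReCx (a b : R) : Re (a +i* b)%C = a. Proof. by []. Qed.
Lemma ImCx (a b : R) : Im (a +i* b)%C = b. Proof. by []. Qed.
Lemma cplx_eq x y : Re x = Re y -> Im x = Im y -> x = y.
Proof. by case: x; case: y => /= a b c d -> ->. Qed.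

Definition CE := (ReM, ImM, ReD, ImD, ReN, ImN, Re1, Im1, Re0, Im0, ReC, ImC, ReCx, ImCx).

Lemma decomp_eq n th ph p1 p2 a1 b1 a2 b2 :
  p1 * a1 ^+ 2 + p2 * a2 ^+ 2 = (1 + n * cos th) / 2 ->
  p1 * b1 ^+ 2 + p2 * b2 ^+ 2 = (1 - n * cos th) / 2 ->
  p1 * a1 * b1 + p2 * a2 * b2 = n * sin th / 2 ->
  rho_state n th ph = \sum_(d <- [:: (p1, ket a1%:C%C (expi ph * b1%:C%C));
                                     (p2, ket a2%:C%C (expi ph * b2%:C%C))])
                       ((d.1)%:C%C *: Defs.proj d.2) :> 'M[R[i]]_2.
Proof.
move=> h00 h11 h01.
apply/matrixP => i j; rewrite /rho_state /rho_bloch /Defs.proj !big_cons big_nil addr0 !mxE.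
rewrite !big_ord_recr !big_ord0 /= !add0r !mxE /=.
case: i => [[|[|//]] ?]; case: j => [[|[|//]] ?] /=; 
  apply: cplx_eq; rewrite /expi /conjc ?CE /=.
all: try (rewrite ?mulr0 ?mul0r ?addr0 ?add0r ?subr0 ?mulr1).
all: have hc := cos2Dsin2 ph.
all: have e1 := congr1 (fun x : R => cos ph * x) h01.
all: have e2 := congr1 (fun x : R => sin ph * x) h01.
all: have e3 := congr1 (fun x : R => x * (p1 * b1 ^+ 2 + p2 * b2 ^+ 2)) hc.
all: rewrite /= in e1 e2 e3.
all: lra.
Qed.

Lemma half_acos (c : R) : -1 <= c <= 1 ->
  cos (acos c / 2) ^+ 2 = (1 + c) / 2 /\ sin (acos c / 2) ^+ 2 = (1 - c) / 2 /\
  2 * (cos (acos c / 2) * sin (acos c / 2)) = Num.sqrt (1 - c ^+ 2).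
Proof.
move=> hc; set t := acos c.
have hcos : cos (t / 2 + t / 2) = c by rewrite -splitr /t acosK // in_itv /= hc.
have hsin : sin (t / 2 + t / 2) = Num.sqrt (1 - c ^+ 2) by rewrite -splitr /t sin_acos.
rewrite cosD in hcos; rewrite sinD in hsin.
have h := cos2Dsin2 (t / 2).
split; [|split]; lra.
Qed.

Lemma Cf_ket k (a b : R) (e : R[i]) :
  Cf (fk k) (ket a%:C%C (e * b%:C%C)) = 1 - (2 * a ^+ 2 - 1) ^+ (2 * k).
Proof. by rewrite /Cf /fk /sqnorm /comp0 /ket mxE /= expr0n /= addr0. Qed.

Lemma Cf_ket01 k : Cf (fk k) (ket (0 : R[i]) 1) = 0.
Proof.
rewrite /Cf /fk /sqnorm /comp0 /ket mxE /= expr0n /= addr0 mulr0 sub0r.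
by rewrite exprM sqrrN expr1n expr1n subrr.
Qed.

Lemma unit_ket (a b : R) ph : a ^+ 2 + b ^+ 2 = 1 ->
  is_unit_vector (ket a%:C%C (expi ph * b%:C%C)).
Proof.
move=> h; rewrite /is_unit_vector /sqnorm /comp0 /comp1 /ket !mxE /=.
have hc := cos2Dsin2 ph.
rewrite /expi /= !mulr0 subr0 add0r expr0n addr0 !exprMn -mulrDl hc mul1r; exact: h.
Qed.

Lemma unit_ket01 : is_unit_vector (ket (0 : R[i]) 1).
Proof. by rewrite /is_unit_vector /sqnorm /comp0 /comp1 /ket !mxE /= expr0n expr1n /= !add0r addr0. Qed.

Lemma proj01 ph : Defs.proj (ket (0 : R[i]) 1) = Defs.proj (ket 0%:C%C (expi ph * 1%:C%C)).
Proof.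
have hc := cos2Dsin2 ph.
apply/matrixP => i j; rewrite /Defs.proj !mxE /= !big_ord1 !mxE /=.
case: i => [[|[|//]] ?]; case: j => [[|[|//]] ?] /=;
  apply: cplx_eq; rewrite /expi /conjc ?CE /=; lra.
Qed.
End H.

Lemma eventually_small (R : realType) (q e : R) : 0 <= q < 1 -> 0 < e ->
  exists K : nat, forall k : nat, (K <= k)%N -> q ^+ k < e.
Proof.
case/andP=> q0 q1 e0.
have hq : `|q| < 1 by rewrite ger0_norm.
have := cvgr_lt 0 (cvg_expr hq) e e0.
case=> N _ HN; exists N => k Hk; exact: HN.
Qed.

Lemma gA (R : realFieldType) (D N x : R) : D != 0 -> x != 0 -> D + N = 2 * x ^+ 2 ->
  D / (2 * x) * ((1 + N / D) / 2) = x / 2.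
Proof.
move=> h1 h2 h3; rewrite (_ : N = 2 * x ^+ 2 - D); last by rewrite -h3; ring.
by field; rewrite h1 h2.
Qed.
Lemma gB (R : realFieldType) (D N x q : R) : D != 0 -> x != 0 -> D + N = 2 * x ^+ 2 ->
  q + D / (2 * x) = 1 -> q * 1 ^+ 2 + D / (2 * x) * ((1 - N / D) / 2) = (2 - x) / 2.
Proof.
move=> h1 h2 h3 h4; rewrite (_ : N = 2 * x ^+ 2 - D); last by rewrite -h3; ring.
rewrite (_ : q = 1 - D / (2 * x)); last by lra.
by field; rewrite h1 h2.
Qed.
Lemma gC (R : realFieldType) (D x y : R) : D != 0 -> x != 0 ->
  D / (2 * x) * (y * x / D) = y / 2.
Proof. by move=> h1 h2; field; rewrite h1 h2. Qed.

Theorem mainTheorem8 (R : realType) :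
  (forall k : nat, (0 < k)%N -> in_Fsc (@fk R k)) /\
  (forall n th ph : R, 0 < n < 1 -> 0 < th <= pi / 2 ->
     [/\ is_pure_decomposition (rho_state n th ph) (Dm1 n th ph),
         is_pure_decomposition (rho_state n th ph) (Dm2 n th ph),
         (exists K : nat, forall k : nat, (0 < k)%N -> (K <= k)%N ->
            avgC (fk k) (Dm1 n th ph) > avgC (fk k) (Dm2 n th ph)) &
         ~ (forall f : R * R -> R, in_Fsc f ->
              avgC f (Dm1 n th ph) <= avgC f (Dm2 n th ph))]).
Proof.
split; first exact: fk_Fsc.
move=> n th ph /andP[n0 n1] /andP[th0 th1].
have pi0 := pi_gt0 R.
have s0 : 0 < sin th by apply: sin_gt0_pi; rewrite th0 /=; lra.
have hcs := cos2Dsin2 th.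
set c := cos th in hcs *; set s := sin th in s0 hcs *.
have q0 : 0 < 1 - n ^+ 2 * s ^+ 2 by nra.
set c3 := Num.sqrt (1 - n ^+ 2 * s ^+ 2).
have c3pos : 0 < c3 by rewrite sqrtr_gt0.
have c3sq : c3 ^+ 2 = 1 - n ^+ 2 * s ^+ 2 by rewrite sqr_sqrtr // ltW.
have c3in : -1 <= c3 <= 1 by apply/andP; split; nra.
have [A2 [B2 AB]] := @half_acos R c3 c3in.
have eAB : Num.sqrt (1 - c3 ^+ 2) = n * s.
  by rewrite c3sq (_ : 1 - (1 - n ^+ 2 * s ^+ 2) = (n * s) ^+ 2) ?sqrtr_sqr ?ger0_norm //;
    [apply: mulr_ge0; apply: ltW | ring].
rewrite eAB in AB.
have cth3 : cos (theta3 n th) = c3 by rewrite /theta3 acosK // in_itv /= c3in.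
set A := cos (acos c3 / 2) in A2 AB; set B := sin (acos c3 / 2) in B2 AB.
have hnc : (c3 + n * c) * (c3 - n * c) = 1 - n ^+ 2 by nra.
have hpos1 : 0 <= c3 + n * c by nra.
have hpos2 : 0 <= c3 - n * c by nra.
set D := 1 + n ^+ 2 + 2 * n * c.
set N := 1 + 2 * n * c + n ^+ 2 * cos (2 * th).
have c2 : cos (2 * th) = c ^+ 2 - s ^+ 2.
  by rewrite (_ : 2 * th = th + th) ?cosD -?expr2 //; ring.
have D0 : 0 < D.
  have -> : D = (n + c) ^+ 2 + s ^+ 2 by rewrite /D; lra.
  by apply: ltr_wpDl; [apply: sqr_ge0 | apply: exprn_gt0].
have cge : -1 <= c.
  have s2 := sqr_ge0 s.
  rewrite leNgt; apply/negP => hc.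
  have : 1 < c ^+ 2 by rewrite expr2; nra.
  lra.
have nc0 : 0 < 1 + n * c.
  have h1 : 0 <= n * (c + 1) by apply: mulr_ge0; lra.
  lra.
have hs2 : s ^+ 2 = 1 - c ^+ 2 by lra.
have eDN : D ^+ 2 - N ^+ 2 = (2 * n * s * (1 + n * c)) ^+ 2 by rewrite /N /D c2 !exprMn hs2; ring.
set c4 := N / D.
have c4sq : 1 - c4 ^+ 2 = (2 * n * s * (1 + n * c) / D) ^+ 2.
  have D0' : D != 0 by apply: lt0r_neq0.
  by rewrite /c4 !expr_div_n -eDN; field.
have c4in : -1 <= c4 <= 1.
  have : 0 <= 1 - c4 ^+ 2 by rewrite c4sq sqr_ge0.
  by move=> h; apply/andP; split; nra.
have [A42 [B42 AB4]] := @half_acos R c4 c4in.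
rewrite c4sq sqrtr_sqr ger0_norm in AB4; last first.
  by apply: divr_ge0; [apply: mulr_ge0; [apply: mulr_ge0; lra | lra] | lra].
have th4 : theta4 n th = acos c4 by [].
set A4 := cos (acos c4 / 2) in A42 AB4; set B4 := sin (acos c4 / 2) in B42 AB4.
have D0' : D != 0 by apply: lt0r_neq0.
have c30' : c3 != 0 by apply: lt0r_neq0.
have nc0' : 1 + n * c != 0 by apply: lt0r_neq0.
have eDpN : D + N = 2 * (1 + n * c) ^+ 2 by rewrite /D /N c2 hs2; ring.
have eA : 2 * A ^+ 2 - 1 = c3 by rewrite A2; field.
have eB : 2 * B ^+ 2 - 1 = - c3 by rewrite B2; field.
have eA4 : 2 * A4 ^+ 2 - 1 = c4 by rewrite A42; field.
have eAB' : A * B = n * s / 2 by lra.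
have eAB4 : A4 * B4 = n * s * (1 + n * c) / D.
  by lra.
have q1pos : 0 < (1 - n ^+ 2) / (2 * (1 + n * c)).
  by apply: divr_gt0; [nra | lra].
have Dm1E : Dm1 n th ph = [:: ((1 + n * c / c3) / 2, ket A%:C%C (expi ph * B%:C%C));
                              ((1 - n * c / c3) / 2, ket B%:C%C (expi ph * A%:C%C))].
  by rewrite /Dm1 /= cth3.
have Dm2E : Dm2 n th ph = [:: ((1 - n ^+ 2) / (2 * (1 + n * c)), ket 0 1);
                              (D / (2 * (1 + n * c)), ket A4%:C%C (expi ph * B4%:C%C))].
  by [].
have hsum : (1 - n ^+ 2) / (2 * (1 + n * c)) + D / (2 * (1 + n * c)) = 1.
  by rewrite /D; field.
have P3 : exists K : nat, forall k : nat, (0 < k)%N -> (K <= k)%N ->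
            avgC (fk k) (Dm1 n th ph) > avgC (fk k) (Dm2 n th ph).
  have hns : 0 < n ^+ 2 * s ^+ 2 by apply: mulr_gt0; apply: exprn_gt0.
  have hq : 0 <= c3 ^+ 2 < 1 by rewrite sqr_ge0 /= c3sq; lra.
  have [K HK] := @eventually_small R _ _ hq q1pos.
  exists K => k _ hk; have := HK k hk.
  rewrite Dm1E Dm2E /avgC !big_cons big_nil /= !Cf_ket Cf_ket01 eA eB eA4.
  rewrite !exprM sqrrN.
  have w0 : 0 <= (c4 ^+ 2) ^+ k by apply: exprn_ge0; apply: sqr_ge0.
  have q2pos : 0 <= D / (2 * (1 + n * c)) by apply: divr_ge0; lra.
  have hsum1 : (1 + n * c / c3) / 2 + (1 - n * c / c3) / 2 = 1 by field.
  set v := (c3 ^+ 2) ^+ k; set w := (c4 ^+ 2) ^+ k in w0 *.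
  move: hsum q1pos q2pos.
  set q1 := (1 - n ^+ 2) / (2 * (1 + n * c)).
  set q2 := D / (2 * (1 + n * c)) => hsum q1pos q2pos.
  set p1 := (1 + n * c / c3) / 2 in hsum1 *; set p2 := (1 - n * c / c3) / 2 in hsum1 *.
  have e1 : p1 * (1 - v) + (p2 * (1 - v) + 0) = 1 - v.
    by rewrite addr0 -mulrDl hsum1 mul1r.
  rewrite e1 mulr0 add0r addr0 => hv.
  have : q2 * (1 - w) <= q2 by rewrite ler_piMr //; lra.
  lra.
split.
- rewrite Dm1E; split.
  + move=> d; rewrite !inE => /orP[/eqP->|/eqP->] /=.
      by rewrite (_ : (1 + n * c / c3) / 2 = (c3 + n * c) / (2 * c3)); [apply: divr_ge0; lra | field].
    by rewrite (_ : (1 - n * c / c3) / 2 = (c3 - n * c) / (2 * c3)); [apply: divr_ge0; lra | field].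
  + by rewrite !big_cons big_nil /=; field.
  + move=> d; rewrite !inE => /orP[/eqP->|/eqP->] /=; apply: unit_ket; lra.
  + apply: decomp_eq; rewrite -/c -/s.
    * by rewrite A2 B2; field.
    * by rewrite A2 B2; field.
    * by rewrite -!mulrA (mulrC B A) eAB'; field.
- rewrite Dm2E; split.
  + move=> d; rewrite !inE => /orP[/eqP->|/eqP->] /=.
      exact: ltW.
    by apply: divr_ge0; lra.
  + by rewrite !big_cons big_nil /= /D; field.
  + move=> d; rewrite !inE => /orP[/eqP->|/eqP->] /=.
      exact: unit_ket01.
    apply: unit_ket; lra.
  + rewrite (@decomp_eq R n th ph ((1 - n ^+ 2) / (2 * (1 + n * c))) (D / (2 * (1 + n * c))) 0 1 A4 B4).
    * by rewrite !big_cons !big_nil /= (proj01 R ph).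
    all: rewrite -/c -/s.
    * by rewrite expr0n /= mulr0 add0r A42 /c4 (@gA _ D N _ D0' nc0' eDpN).
    * rewrite B42 /c4 (@gB _ D N _ _ D0' nc0' eDpN hsum); lra.
    * by rewrite mulr0 mul0r add0r -mulrA eAB4 (@gC _ D _ (n * s) D0' nc0').
- exact: P3.
- move=> H; have [K HK] := P3.
  have := HK (K.+1) isT (leqnSn K).
  have := H (fk K.+1) (fk_Fsc R K.+1 isT).
  lra.
Qed.
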